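(* Let $\|\cdot\|$ be any submultiplicative matrix norm, $L>0$ (with $L\ge1$), $\alpha\in(0,1)$, $\Delta:=(\alpha^{1/2}-\alpha)/L$, and integers $t'<t''$. Suppose square matrices $\{\Phi_t\}_{t=t'+1}^{t''}$ and $\{\Phi'_t\}_{t=t'+1}^{t''}$ satisfy $\|\Phi_{s_2}\Phi_{s_2-1}\cdots\Phi_{s_1}\|\le L\alpha^{s_2-s_1+1}$ for all $t'+1\le s_1\le s_2\le t''$ and $\|\Phi_t-\Phi'_t\|\le\Delta$ for all $t\in\{t'+1,\dots,t''\}$. Then $\|\Phi'_{t''}\Phi'_{t''-1}\cdots\Phi'_{t'+1}\|\le L\alpha^{(t''-t')/2}$.
   Context: Products are ordered with larger indices on the left. The hypothesis on consecutive products of $\Phi_t$ is the bound used for every sub-block of consecutive factors (the paper states it as $\|\prod_{t=t'+1}^{t''}\Phi_t\|\le L\alpha^{t''-t'}$ applied to all consecutive subranges). *)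

(* Defs.v *)
From HB Require Import structures.
From mathcomp Require Import all_boot all_order all_algebra.
Set Implicit Arguments. Unset Strict Implicit. Unset Printing Implicit Defensive.
Import Order.TTheory GRing.Theory Num.Theory.
Local Open Scope ring_scope.

Definition submult_mx_norm (R : numDomainType) (n : nat) (N : 'M[R]_n -> R) : Prop :=
  [/\ forall A, 0 <= N A,
      forall A, N A = 0 -> A = 0,
      forall A B, N (A + B) <= N A + N B,
      forall (a : R) A, N (a *: A) = `|a| * N A
    & forall A B, N (A *m B) <= N A * N B].

(* Ordered product with larger indices on the left:
   mxprod Phi a k = Phi (a+k-1) *m ... *m Phi (a+1) *m Phi a  (k factors). *)
Fixpoint mxprod (R : pzRingType) (n : nat) (Phi : int -> 'M[R]_n) (a : int) (k : nat)
  : 'M[R]_n :=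
  match k with
  | 0 => 1%:M
  | k'.+1 => Phi (a + k'%:Z) *m mxprod Phi a k'
  end.

(* Main.v *)
Require Import Defs.
From HB Require Import structures.
From mathcomp Require Import all_boot all_order all_algebra.
From mathcomp Require Import zify ring lra.
Import Order.TTheory GRing.Theory Num.Theory.
Local Open Scope ring_scope.

Lemma mxprodSr (R : pzRingType) (n : nat) (P : int -> 'M[R]_n) (b : int) (k : nat) :
  mxprod P b k.+1 = mxprod P (b + 1) k *m P b.
Proof.
elim: k => [|k IH] /=; first by rewrite addr0 mulmx1 mul1mx.
rewrite /= in IH; rewrite IH mulmxA.
have -> : b + (k.+1)%:Z = b + 1 + k%:Z by lia.
by [].
Qed.

Theorem lemmaB1 (R : rcfType) (n : nat) (N : 'M[R]_n -> R)
  (L alpha : R) (t1 t2 : int) (Phi Phi' : int -> 'M[R]_n) :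
  submult_mx_norm N ->
  0 < L -> 1 <= L ->
  0 < alpha -> alpha < 1 ->
  (t1 < t2)%R ->
  (forall s1 s2 : int, (t1 + 1 <= s1)%R -> (s1 <= s2)%R -> (s2 <= t2)%R ->
     N (mxprod Phi s1 (absz (s2 - s1 + 1))) <= L * alpha ^+ (absz (s2 - s1 + 1))) ->
  (forall t : int, (t1 + 1 <= t)%R -> (t <= t2)%R ->
     N (Phi t - Phi' t) <= (Num.sqrt alpha - alpha) / L) ->
  N (mxprod Phi' (t1 + 1) (absz (t2 - t1)%R)) <= L * Num.sqrt alpha ^+ (absz (t2 - t1)%R).
Proof.
move=> [N0 _ Ntri Nsc Nmul] L0 L1 a0 a1 t12 HPhi HD.
set s := Num.sqrt alpha.
set D := (s - alpha) / L.
set M := absz (t2 - t1).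
have hM : t2 - t1 = M%:Z by rewrite /M gtz0_abs // subr_gt0.
set a := t1 + 1.
have s_ge : alpha <= s.
  have s0 : 0 <= s by rewrite /s sqrtr_ge0.
  have s1 : s <= 1 by rewrite /s -sqrtr1 ler_sqrt // ltW.
  have -> : alpha = s ^+ 2 by rewrite /s sqr_sqrtr // ltW.
  by rewrite expr2 ler_piMr.
have D0 : 0 <= D by rewrite /D divr_ge0 // ?subr_ge0 // ltW.
have LD : L * D = s - alpha by rewrite /D mulrC mulfVK // gt_eqF.
have hB : forall j k, (0 < k)%N -> (k + j <= M)%N ->
    N (mxprod Phi (a + j%:Z) k) <= L * alpha ^+ k.
  move=> j k k0 kjM.
  have := HPhi (a + j%:Z) (a + j%:Z + k%:Z - 1).
  have -> : a + j%:Z + k%:Z - 1 - (a + j%:Z) + 1 = k%:Z by ring.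
  rewrite absz_nat; apply; rewrite /a; lia.
have hE : forall j, (j < M)%N -> N (Phi (a + j%:Z) - Phi' (a + j%:Z)) <= D.
  move=> j jM; apply: HD; rewrite /a; lia.
have NN : forall A B, N (A - B) <= N A + N B.
  move=> A B; rewrite -scaleN1r; apply: le_trans (Ntri _ _) _.
  by rewrite Nsc normrN normr1 mul1r.
have key : forall j, (j <= M)%N -> forall k, (k + j <= M)%N -> (0 < k + j)%N ->
    N (mxprod Phi (a + j%:Z) k *m mxprod Phi' a j) <= L * alpha ^+ k * s ^+ j.
  elim=> [|j IH] jM k kjM kj0.
    rewrite addr0 /= mulmx1 expr0 mulr1 addn0 in kjM kj0 *.
    by have := hB 0%N k; rewrite addr0 addn0; apply.
  have jM' : (j <= M)%N by apply: ltnW.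
  set B := mxprod Phi (a + j.+1%:Z) k.
  set P := mxprod Phi' a j.
  set E := Phi (a + j%:Z) - Phi' (a + j%:Z).
  have eq1 : B *m mxprod Phi' a j.+1 = mxprod Phi (a + j%:Z) k.+1 *m P - B *m (E *m P).
    rewrite [mxprod Phi' a j.+1]/= mxprodSr.
    have -> : a + j%:Z + 1 = a + j.+1%:Z by lia.
    rewrite -/B -mulmxA -mulmxBr -mulmxBl; congr (_ *m (_ *m _)).
    by rewrite /E opprB addrCA subrr addr0.
  rewrite eq1; apply: le_trans (NN _ _) _.
  have h1 := IH jM' k.+1 ltac:(lia) ltac:(lia).
  have hBf : forall X, N (B *m X) <= L * alpha ^+ k * N X.
    move=> X; case: (posnP k) => [k0|kpos].
      by rewrite /B k0 /= mul1mx expr0 mulr1 ler_peMl.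
    apply: le_trans (Nmul _ _) _; apply: ler_wpM2r => //.
    by apply: hB; lia.
  have hPg : forall Y, N (Y *m P) <= N Y * (L * s ^+ j).
    move=> Y; case: (boolP (j == 0%N)) => [/eqP j0|jpos].
      have -> : P = 1%:M by rewrite /P j0.
      have -> : s ^+ j = 1 by rewrite j0 expr0.
      by rewrite mulmx1 mulr1 ler_peMr.
    apply: le_trans (Nmul _ _) _; apply: ler_wpM2l => //.
    have := IH jM' 0%N ltac:(lia) ltac:(lia).
    by rewrite /= mul1mx expr0 mulr1.
  have h2 : N (B *m (E *m P)) <= L * alpha ^+ k * (D * (L * s ^+ j)).
    apply: le_trans (hBf _) _; apply: ler_wpM2l.
      by rewrite mulr_ge0 // ?exprn_ge0 // ltW.
    apply: le_trans (hPg _) _; apply: ler_wpM2r.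
      by apply: mulr_ge0; [apply: ltW | apply: exprn_ge0; rewrite /s sqrtr_ge0].
    by apply: hE; lia.
  apply: le_trans (lerD h1 h2) _.
  have -> : L * alpha ^+ k * (D * (L * s ^+ j)) = L * alpha ^+ k * s ^+ j * (L * D) by ring.
  rewrite LD le_eqVlt; apply/orP; left; apply/eqP; rewrite !exprS; ring.
have := key M (leqnn M) 0%N (leqnn _) _.
rewrite /= mul1mx expr0 mulr1; apply.
have : t1 < t2 := t12. rewrite /M. lia.
Qed.
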